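(* There does not exist a map $T$ assigning a real number to each observed-data law $P$ of $O=(X,A,W,Y)$ (with $A\in\{0,1\}$) such that both: (i) $T(P)=\theta_{\mathrm{ATE}}:=\mathbb{E}\{Y^{(1)}-Y^{(0)}\}$ for every observed-data law $P$ induced by a causal data-generating process satisfying the positivity condition and the confounder-model assumptions; and (ii) $T(P)=\theta_{\mathrm{NDE}}:=\mathbb{E}\{Y^{(1,W^{(0)})}-Y^{(0,W^{(0)})}\}$ for every observed-data law $P$ induced by a causal data-generating process satisfying the positivity condition, the mediator-model assumptions, and the cross-world condition.
   Context: Positivity: $0<\mathbb{P}(A=1\mid X=x,W=w)<1$ for $P$-a.e. $(x,w)$, and under the mediator model additionally $0<\mathbb{P}(A=1\mid X=x)<1$ for $P$-a.e. $x$. Confounder-model assumptions ($W$ pre-exposure, potential outcomes $Y^{(0)},Y^{(1)}$): (a) if $A=a$ then $Y=Y^{(a)}$ a.s.; (b) $Y^{(a)}\perp\!\!\!\perp A\mid(X,W)$ for $a\in\{0,1\}$. Mediator-model assumptions ($W$ post-exposure, potential mediators $W^{(a)}$, potential outcomes $Y^{(a,w)}$ with $Y^{(a)}=Y^{(a,W^{(a)})}$): (a) if $A=a$ then $W=W^{(a)}$ a.s.; (b) if $A=a,W=w$ then $Y=Y^{(a,w)}$ a.s.; (c) $(Y^{(a,w)},W^{(a')})\perp\!\!\!\perp A\mid X$ for all $a,a',w$; (d) $Y^{(a,w)}\perp\!\!\!\perp W\mid(A=a,X)$ for all $a,w$. Cross-world condition: $Y^{(a,w)}\perp\!\!\!\perp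 W^{(a')}\mid X$ for all $a,a',w$. Here $X$ are baseline covariates (possibly absent). *)

(* Defs.v *)
From HB Require Import structures.
From mathcomp Require Import all_boot all_order all_algebra.
From mathcomp Require Import all_classical all_reals all_analysis.
Set Implicit Arguments. Unset Strict Implicit. Unset Printing Implicit Defensive.
Import Order.TTheory GRing.Theory Num.Theory.
Local Open Scope classical_set_scope.
Local Open Scope ring_scope.

Section Defs.
Context (R : realType) (d : measure_display) (Omega : measurableType d)
  (P : probability Omega R).

(* Conditional independence of U and V given Z, under P restricted to the
   event E (E = setT gives ordinary conditional independence; E = [A = a]
   gives independence "given A = a, Z").  Characterization: for every
   measurable B there is a version g(Z) of P(U in B | Z) (values in [0,1])
   which is also a version of P(U in B | V, Z), i.e.
   E[1_E 1_B(U) 1_C(V) 1_D(Z)] = E[1_E g(Z) 1_C(V) 1_D(Z)] for all C, D. *)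
Definition cond_indep_on {dU dV dZ} {TU : measurableType dU}
  {TV : measurableType dV} {TZ : measurableType dZ}
  (E : set Omega) (U : Omega -> TU) (V : Omega -> TV) (Z : Omega -> TZ) : Prop :=
  forall B : set TU, measurable B ->
  exists g : TZ -> R, measurable_fun setT g /\ (forall z, 0 <= g z <= 1) /\
    forall (C : set TV) (D : set TZ), measurable C -> measurable D ->
      (\int[P]_w ((\1_E w * \1_B (U w) * \1_C (V w) * \1_D (Z w))%:E) =
       \int[P]_w ((\1_E w * g (Z w) * \1_C (V w) * \1_D (Z w))%:E))%E.

Definition cond_indep {dU dV dZ} {TU : measurableType dU}
  {TV : measurableType dV} {TZ : measurableType dZ}
  (U : Omega -> TU) (V : Omega -> TV) (Z : Omega -> TZ) : Prop :=
  cond_indep_on setT U V Z.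

Definition positivity {dZ} {TZ : measurableType dZ}
  (A : Omega -> bool) (Z : Omega -> TZ) : Prop :=
  exists g : TZ -> R, measurable_fun setT g /\
    (forall D : set TZ, measurable D ->
      (\int[P]_w ((\1_[set w | A w] w * \1_D (Z w))%:E) =
       \int[P]_w ((g (Z w) * \1_D (Z w))%:E))%E) /\
    {ae P, forall w, 0 < g (Z w) < 1}.

Definition law_of_obs {dx} {TX : measurableType dx}
  (Q : probability (TX * bool * R * R)%type R)
  (X : Omega -> TX) (A : Omega -> bool) (W : Omega -> R) (Y : Omega -> R) : Prop :=
  forall B : set (TX * bool * R * R)%type, measurable B ->
    Q B = P ((fun w => (X w, A w, W w, Y w)) @^-1` B).

(* Confounder model (W pre-exposure, potential outcomes Y0 = Y^(0), Y1 = Y^(1)),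
   together with positivity; integrability makes theta_ATE a real number. *)
Definition confounder_model {dx} {TX : measurableType dx}
  (X : Omega -> TX) (A : Omega -> bool) (W : Omega -> R) (Y : Omega -> R)
  (Y0 Y1 : Omega -> R) : Prop :=
  [/\ measurable_fun setT X, measurable_fun setT A, measurable_fun setT W,
      measurable_fun setT Y &
  [/\ P.-integrable setT (EFin \o Y0), P.-integrable setT (EFin \o Y1),
      positivity A (fun w => (X w, W w)),
      {ae P, forall w, Y w = if A w then Y1 w else Y0 w} &
      cond_indep Y0 A (fun w => (X w, W w)) /\
      cond_indep Y1 A (fun w => (X w, W w))]].

Definition theta_ATE (Y0 Y1 : Omega -> R) : \bar R :=
  (\int[P]_w (Y1 w - Y0 w)%:E)%E.

(* Mediator model (W post-exposure, potential mediators W0 = W^(0),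
   W1 = W^(1), potential outcomes Yaw a w = Y^(a,w)), together with
   positivity and the cross-world condition; integrability makes
   theta_NDE a real number. *)
Definition mediator_model {dx} {TX : measurableType dx}
  (X : Omega -> TX) (A : Omega -> bool) (W : Omega -> R) (Y : Omega -> R)
  (W0 W1 : Omega -> R) (Yaw : bool -> R -> Omega -> R) : Prop :=
  [/\ measurable_fun setT X, measurable_fun setT A, measurable_fun setT W,
      measurable_fun setT Y &
  [/\ measurable_fun setT W0 /\ measurable_fun setT W1,
      (forall a w, measurable_fun setT (Yaw a w)),
      P.-integrable setT (fun o => (Yaw true (W0 o) o)%:E),
      P.-integrable setT (fun o => (Yaw false (W0 o) o)%:E) &
  [/\
      positivity A (fun o => (X o, W o)) /\ positivity A X,
      {ae P, forall o, W o = if A o then W1 o else W0 o} /\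
      {ae P, forall o, Y o = Yaw (A o) (W o) o},
      (forall a a' w,
          cond_indep (fun o => (Yaw a w o, if a' then W1 o else W0 o)) A X),
      (forall a w,
          cond_indep_on [set o | A o = a] (Yaw a w) W X) &
      (forall a a' w,
          cond_indep (Yaw a w) (if a' then W1 else W0) X)]]].

Definition theta_NDE (W0 : Omega -> R) (Yaw : bool -> R -> Omega -> R) : \bar R :=
  (\int[P]_o (Yaw true (W0 o) o - Yaw false (W0 o) o)%:E)%E.

End Defs.

(* Main.v *)
Require Import Defs.
From HB Require Import structures.
From mathcomp Require Import all_boot all_order all_algebra.
From mathcomp Require Import all_classical all_reals all_analysis.
From mathcomp Require Import ring lra.
Set Implicit Arguments. Unset Strict Implicit. Unset Printing Implicit Defensive.
Import Order.TTheory GRing.Theory Num.Theory.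
Local Open Scope classical_set_scope.
Local Open Scope ring_scope.

Section S.
Context (R : realType).
Definition mu8 : set nat -> \bar R :=
  mscale (8%:R^-1)%:nng (msum (fun i => @dirac _ nat i R) 8).
HB.instance Definition _ := Measure.on mu8.
Lemma mu8T : mu8 setT = 1%E.
Proof.
rewrite /mu8 /mscale /msum /=.
rewrite /msum /=.
rewrite !big_ord_recr !big_ord0 /= !diracE !in_setT /=.
rewrite !add0e -!EFinD -EFinM; congr (_%:E).
rewrite -!natrD mulVf //.

Qed.
HB.instance Definition _ := Measure_isProbability.Build _ _ _ mu8 mu8T.
Lemma mnat (A : set nat) : measurable A. Proof. by []. Qed.
Lemma intP (f : nat -> R) : (forall n, 0 <= f n) ->
  (\int[mu8]_w (f w)%:E = (\sum_(i < 8) f i / 8%:R)%:E)%E.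
Proof.
move=> f0.
rewrite /mu8 ge0_integral_mscale //=; last by move=> *; rewrite lee_fin.
rewrite ge0_integral_measure_sum //=; last by move=> *; rewrite lee_fin.
under eq_bigr do rewrite integral_dirac //= diracE in_setT mul1e.
rewrite sumEFin -EFinM; congr (_%:E).
rewrite mulr_sumr; apply: eq_bigr => i _; by rewrite mulrC.
Qed.
Lemma mfnat d' (T' : measurableType d') (f : nat -> T') : measurable_fun setT f.
Proof. by move=> _ B _. Qed.

Lemma ind01 (T : Type) (S : set T) x : 0 <= (\1_S x : R) <= 1.
Proof. by rewrite indicE; case: (x \in S) => /=; rewrite ?lexx ?ler01. Qed.
Lemma ind0 (T : Type) (S : set T) x : 0 <= (\1_S x : R).
Proof. by case/andP: (ind01 S x). Qed.
Lemma indb (f : nat -> bool) n : \1_[set w | f w] n = (f n)%:R :> R.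
Proof.
rewrite indicE; case H: (f n).
  by rewrite mem_set.
by rewrite memNset //= H.
Qed.
Lemma indT' (T : Type) (x : T) : \1_[set: T] x = 1 :> R.
Proof. by rewrite indicT. Qed.
Lemma ind11 : \1_[set (1:R)] (1:R) = 1 :> R.
Proof. by rewrite indicE mem_set. Qed.
Lemma ind10 : \1_[set (1:R)] (0:R) = 0 :> R.
Proof. by rewrite indicE memNset //= => /eqP; rewrite eq_sym oner_eq0. Qed.

Definition b2r (b : bool) : R := if b then 1 else 0.
Definition Am (n : nat) : bool := odd n.
Definition W1m n := b2r (odd (half n)).
Definition W0m n := b2r (odd (half n) && odd (half (half n))).
Definition Wm n := if Am n then W1m n else W0m n.
Definition Ym n := if Am n then Wm n else 0.
Definition Y0m (n : nat) : R := 0.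
Definition Yawm (a : bool) (w : R) (n : nat) : R := if a then w else 0.

Lemma b2r_ge0 b : 0 <= b2r b. Proof. by case: b => /=; rewrite ?lexx ?ler01. Qed.

Lemma ci_fun dU dV dZ (TU : measurableType dU) (TV : measurableType dV)
  (TZ : measurableType dZ) (E : set nat) (U : nat -> TU) (V : nat -> TV)
  (Z : nat -> TZ) (f : TZ -> TU) :
  measurable_fun setT f -> (forall w, U w = f (Z w)) ->
  cond_indep_on mu8 E U V Z.
Proof.
move=> mf UE B mB; exists (\1_B \o f); split.
  by apply: measurableT_comp => //; exact: measurable_indic.
split; first by move=> z; exact: ind01.
move=> C D _ _; congr (integral _ _ _); apply/funext => w /=.
by rewrite UE.
Qed.

Lemma thetaATE : theta_ATE mu8 Y0m Wm = (3%:R / 8%:R)%:E.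
Proof.
rewrite /theta_ATE intP; last first.
  by move=> n; rewrite /Y0m subr0 /Wm /W1m /W0m; case: ifP => _; exact: b2r_ge0.
congr (_%:E).
rewrite !big_ord_recr !big_ord0 /= /Y0m /Wm /W1m /W0m /b2r /Am /=.
lra.
Qed.

Lemma thetaNDE : theta_NDE mu8 W0m Yawm = (1 / 4%:R)%:E.
Proof.
rewrite /theta_NDE intP; last first.
  by move=> n; rewrite /Yawm subr0 /W0m; exact: b2r_ge0.
congr (_%:E).
rewrite !big_ord_recr !big_ord0 /= /Yawm /W0m /b2r /=.
lra.
Qed.
Ltac nn := move=> ?; repeat apply: mulr_ge0; rewrite ?ind0 //.
Ltac expand8 := congr (_%:E); rewrite !big_ord_recr !big_ord0 /=.

Section X.
Context (dx : measure_display) (TX : measurableType dx).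
Definition Xm (n : nat) : TX := point.

Lemma posXW : positivity mu8 Am (fun w => (Xm w, Wm w)).
Proof.
exists (fun z : TX * R => 2 / 5%:R + 4%:R / 15%:R * \1_[set (1:R)] z.2).
split.
  apply: measurable_realfun.measurable_funD; first exact: measurable_cst.
  apply: measurable_realfun.measurable_funM; first exact: measurable_cst.
  apply: measurableT_comp; last exact: measurable_snd.
  apply: measurable_realfun.measurable_indic; exact: measurable_set1.
split.
  move=> D mD; rewrite !intP; last 2 first.
  - nn.
  - move=> n; apply: mulr_ge0; rewrite ?ind0 //.
  expand8.
  rewrite !indb /Xm /Wm /Am /W1m /W0m /b2r /= !ind11 !ind10.
  lra.
apply: aeW => w /=.
have /andP[h0 h1] := ind01 [set (1:R)] (Wm w).
apply/andP; split; lra.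
Qed.

Lemma posX : positivity mu8 Am Xm.
Proof.
exists (fun _ => 1 / 2%:R).
split; first exact: measurable_cst.
split.
  move=> D mD; rewrite !intP; last 2 first.
  - nn.
  - move=> n; apply: mulr_ge0; rewrite ?ind0 //.
  expand8.
  rewrite !indb /Xm /Am /=.
  lra.
apply: aeW => w /=.
apply/andP; split; lra.
Qed.

Lemma ciC a w a' : cond_indep mu8 (fun o => (Yawm a w o, if a' then W1m o else W0m o)) Am Xm.
Proof.
move=> B mB.
set c := if a then w else 0.
have h0 := ind01 B (c, 0); have h1 := ind01 B (c, 1).
move/andP: h0 => [h00 h01]; move/andP: h1 => [h10 h11].
case: a'.
- exists (fun _ => (\1_B (c, 0) + \1_B (c, 1)) / 2%:R).
  split; first exact: measurable_cst.
  split; first by move=> _; apply/andP; split; lra.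
  move=> C D _ _; rewrite !intP; last 2 first.
  + move=> n; repeat apply: mulr_ge0; rewrite ?ind0 //; lra.
  + nn.
  expand8.
  rewrite !indT' /Yawm /Xm /Am /W1m /W0m /b2r /= -/c.
  by field.
- exists (fun _ => (3%:R * \1_B (c, 0) + \1_B (c, 1)) / 4%:R).
  split; first exact: measurable_cst.
  split; first by move=> _; apply/andP; split; lra.
  move=> C D _ _; rewrite !intP; last 2 first.
  + move=> n; repeat apply: mulr_ge0; rewrite ?ind0 //; lra.
  + nn.
  expand8.
  rewrite !indT' /Yawm /Xm /Am /W1m /W0m /b2r /= -/c.
  by field.
Qed.

Definition obs (n : nat) : TX * bool * R * R := (Xm n, Am n, Wm n, Ym n).
HB.instance Definition _ := isMeasurableFun.Build _ _ _ _ obs (mfnat obs).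
Definition Qm := distribution mu8 obs.

Lemma int8 (f : nat -> R) : mu8.-integrable setT (fun x => (f x)%:E).
Proof.
apply/integrableP; split; first by move=> _ B _.
under eq_integral => x _ do rewrite abse_EFin.
by rewrite intP ?ltry // => n; exact: normr_ge0.
Qed.

Lemma conf : confounder_model mu8 Xm Am Wm Ym Y0m Wm.
Proof.
split; try exact: mfnat.
split.
- exact: (int8 Y0m).
- exact: (int8 Wm).
- exact: posXW.
- by apply: aeW => n.
- split.
  + rewrite /cond_indep; apply: (@ci_fun _ _ _ _ _ _ _ _ _ _ (fun _ : TX * R => (0:R))); [exact: measurable_cst | by []].
  + by apply: (@ci_fun _ _ _ _ _ _ _ _ _ _ snd) => //; exact: measurable_snd.
Qed.

Lemma med : mediator_model mu8 Xm Am Wm Ym W0m W1m Yawm.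
Proof.
split; try exact: mfnat.
split.
- by split; exact: mfnat.
- by move=> a w; exact: mfnat.
- exact: (int8 (fun o => Yawm true (W0m o) o)).
- exact: (int8 (fun o => Yawm false (W0m o) o)).
- split.
  + by split; [exact: posXW | exact: posX].
  + by split; apply: aeW => n.
  + by move=> a a' w; exact: ciC.
  + move=> a w.
    by apply: (@ci_fun _ _ _ _ _ _ _ _ _ _ (fun _ : TX => if a then w else 0)) => //; exact: measurable_cst.
  + move=> a a' w.
    by apply: (@ci_fun _ _ _ _ _ _ _ _ _ _ (fun _ : TX => if a then w else 0)) => //; exact: measurable_cst.
Qed.

Lemma law : law_of_obs mu8 Qm Xm Am Wm Ym.
Proof. by []. Qed.
End X.
End S.

Unset Implicit Arguments.
Theorem theorem1 (R : realType) (dx : measure_display) (TX : measurableType dx) :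
  ~ exists T : probability (TX * bool * R * R)%type R -> R,
    (forall (d : measure_display) (Omega : measurableType d)
            (P : probability Omega R)
            (X : Omega -> TX) (A : Omega -> bool) (W Y Y0 Y1 : Omega -> R)
            (Q : probability (TX * bool * R * R)%type R),
        confounder_model P X A W Y Y0 Y1 -> law_of_obs P Q X A W Y ->
        (T Q)%:E = theta_ATE P Y0 Y1) /\
    (forall (d : measure_display) (Omega : measurableType d)
            (P : probability Omega R)
            (X : Omega -> TX) (A : Omega -> bool) (W Y W0 W1 : Omega -> R)
            (Yaw : bool -> R -> Omega -> R)
            (Q : probability (TX * bool * R * R)%type R),
        mediator_model P X A W Y W0 W1 Yaw -> law_of_obs P Q X A W Y ->
        (T Q)%:E = theta_NDE P W0 Yaw).
Proof.
case=> T [H1 H2].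
have e1 := H1 _ _ _ _ _ _ _ _ _ _ (@conf R _ TX) (@law R _ TX).
have e2 := H2 _ _ _ _ _ _ _ _ _ _ _ (@med R _ TX) (@law R _ TX).
rewrite thetaATE in e1; rewrite thetaNDE e1 in e2.
case: e2 => e2; clear e1 H1 H2; lra.
Qed.
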